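(* Let $p>1$ and let $\varphi:\mathbb{R}^n\to\mathbb{R}\cup\{+\infty\}$ be proper and lower semicontinuous. The following are equivalent: (a) $\varphi$ is high-order prox-bounded with order $p$; (b) there exists $\ell>0$ such that $\varphi(\cdot)+\ell\|\cdot\|^p$ is bounded from below on $\mathbb{R}^n$; (c) $\liminf_{\|x\|\to\infty}\frac{\varphi(x)}{\|x\|^p}>-\infty$.
   Context: For $p>1$, $\gamma>0$, the high-order Moreau envelope of $\varphi$ is $\varphi^p_\gamma(x):=\inf_{y\in\mathbb{R}^n}\big(\varphi(y)+\frac{1}{p\gamma}\|x-y\|^p\big)$. The function $\varphi$ is called high-order prox-bounded with order $p$ if there exist $\gamma>0$ and $x\in\mathbb{R}^n$ with $\varphi^p_\gamma(x)>-\infty$. $\|\cdot\|$ is the Euclidean norm. *)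

(* Defs.v *)
From HB Require Import structures.
From mathcomp Require Import all_boot all_order all_algebra.
From mathcomp Require Import all_classical all_reals all_analysis.
Set Implicit Arguments. Unset Strict Implicit. Unset Printing Implicit Defensive.
Import Order.TTheory GRing.Theory Num.Theory.
Import numFieldNormedType.Exports.
Local Open Scope classical_set_scope.
Local Open Scope ring_scope.

Definition enorm {R : realType} {n : nat} (x : 'rV[R]_n) : R :=
  Num.sqrt (\sum_(i < n) x ord0 i ^+ 2).

Definition proper_fun {R : realType} {n : nat} (phi : 'rV[R]_n -> \bar R) : Prop :=
  (forall x, phi x != -oo%E) /\ (exists x, phi x != +oo%E).

Definition moreau_env {R : realType} {n : nat} (phi : 'rV[R]_n -> \bar R)
  (p gamma : R) (x : 'rV[R]_n) : \bar R :=
  ereal_inf [set (phi y + ((p * gamma)^-1 * (enorm (x - y)) `^ p)%:E)%E | y in setT].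

Definition hprox_bounded {R : realType} {n : nat} (phi : 'rV[R]_n -> \bar R) (p : R) : Prop :=
  exists gamma : R, 0 < gamma /\ exists x, (-oo < moreau_env phi p gamma x)%E.

(* liminf_{||x|| -> oo} phi(x)/||x||^p  :=  sup_r inf_{||x|| > r} phi(x)/||x||^p *)
Definition liminf_ratio {R : realType} {n : nat} (phi : 'rV[R]_n -> \bar R) (p : R) : \bar R :=
  ereal_sup [set ereal_inf [set (phi x * ((enorm x) `^ p)^-1%:E)%E | x in [set x | r < enorm x]]
            | r in [set: R]].

(* Main.v *)
Require Import Defs.
From HB Require Import structures.
From mathcomp Require Import all_boot all_order all_algebra.
From mathcomp Require Import all_classical all_reals all_analysis.
From mathcomp Require Import lra.
Import Order.TTheory GRing.Theory Num.Theory.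
Import numFieldNormedType.Exports.
Local Open Scope classical_set_scope.
Local Open Scope ring_scope.

Lemma lsc_compact_lb (T : ptopologicalType) (R : realType) (f : T -> \bar R) (K : set T) :
  compact K -> lower_semicontinuous f -> (forall x, f x != -oo%E) ->
  exists M : R, forall x, K x -> (M%:E <= f x)%E.
Proof.
move=> /compact_near_coveringP cK lsc fN.
have : \forall N \near \oo, K `<=` (fun x => ((- N%:R)%:E < f x)%E).
  apply: (cK nat \oo (fun i x => ((- i%:R)%:E < f x)%E)).
  move=> x Kx.
  have [k hk] : exists k : nat, ((- k%:R)%:E < f x)%E.
    have := fN x; case: (f x) => [r _| _|] //; last by exists 0%N; rewrite ltry.
    exists (Num.truncn (`|r|)).+1; rewrite lte_fin ltrNl.
    by apply: le_lt_trans (truncnS_gt _); rewrite -normrN ler_norm.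
  have [V nV HV] := lsc x _ hk.
  exists (V, [set i | (k <= i)%N]) => /=.
    split => //; exists k => //.
  move=> [y i] /= [Vy ki]. apply: (le_lt_trans _ (HV _ Vy)).
  by rewrite lee_fin lerN2 ler_nat.
move=> [N0 _ HN]; exists (- N0%:R) => x Kx; by apply/ltW/(HN N0) => /=.

Qed.

Lemma enorm_ge0 {R : realType} {n : nat} (x : 'rV[R]_n) : 0 <= enorm x.
Proof. exact: sqrtr_ge0. Qed.

Lemma enorm_coord {R : realType} {n : nat} (x : 'rV[R]_n) i : `|x ord0 i| <= enorm x.
Proof.
rewrite /enorm -sqrtr_sqr ler_wsqrtr // (bigD1 i) //= lerDl.
by apply: sumr_ge0 => j _; exact: sqr_ge0.
Qed.

Lemma enormN {R : realType} {n : nat} (x : 'rV[R]_n) : enorm (0 - x) = enorm x.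
Proof.
rewrite /enorm; congr Num.sqrt; apply: eq_bigr => i _.
by rewrite !mxE sub0r sqrrN.
Qed.

Lemma enorm_sq {R : realType} {n : nat} (x : 'rV[R]_n) : enorm x ^+ 2 = \sum_(i < n) x ord0 i ^+ 2.
Proof. by rewrite /enorm sqr_sqrtr //; apply: sumr_ge0 => j _; exact: sqr_ge0. Qed.

Lemma enormB_le {R : realType} {n : nat} (x y : 'rV[R]_n) :
  enorm (x - y) ^+ 2 <= 2 * (enorm x ^+ 2 + enorm y ^+ 2).
Proof.
rewrite !enorm_sq -big_split mulr_sumr /=; apply: ler_sum => i _.
rewrite !mxE; have := sqr_ge0 (x ord0 i + y ord0 i). nra.
Qed.

Lemma enormB_le2 {R : realType} {n : nat} (x y : 'rV[R]_n) :
  enorm (x - y) <= 2 * enorm x \/ enorm (x - y) <= 2 * enorm y.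
Proof.
have h := enormB_le x y.
have h0 := enorm_ge0 (x - y); have hx := enorm_ge0 x; have hy := enorm_ge0 y.
case: (lerP (enorm x) (enorm y)) => hxy; [right|left];
  rewrite -(@ler_pXn2r _ 2) // ?nnegrE ?mulr_ge0 //; nra.
Qed.

Lemma phi_lb_ball {R : realType} {n : nat} (phi : 'rV[R]_n -> \bar R) (r : R) :
  lower_semicontinuous phi -> (forall x, phi x != -oo%E) ->
  exists M : R, forall x, enorm x <= r -> (M%:E <= phi x)%E.
Proof.
move=> lsc fN.
have cK : compact [set v : 'rV[R]_n | forall i, `[- r, r]%classic (v ord0 i)].
  by apply: (@rV_compact R n (fun=> `[- r, r]%classic)) => i; exact: segment_compact.
have [M HM] := lsc_compact_lb _ _ _ _ cK lsc fN.
exists M => x hx; apply: HM => i /=; rewrite in_itv /= -ler_norml.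
exact: le_trans (enorm_coord x i) hx.
Qed.

Theorem proposition1 (R : realType) (n : nat) (p : R) (phi : 'rV[R]_n -> \bar R) :
  1 < p -> proper_fun phi -> lower_semicontinuous phi ->
  (hprox_bounded phi p <->
     exists l : R, 0 < l /\ exists m : R, forall x, (m%:E <= phi x + (l * (enorm x) `^ p)%:E)%E)
  /\
  ((exists l : R, 0 < l /\ exists m : R, forall x, (m%:E <= phi x + (l * (enorm x) `^ p)%:E)%E)
     <-> (-oo < liminf_ratio phi p)%E).
Proof.
move=> p1 [fN _] lsc.
have p0 : 0 < p by apply: lt_trans p1.
split; split.
- move=> [g [g0 [x0 hx0]]].
  set c := (p * g)^-1.
  have c0 : 0 < c by rewrite invr_gt0 mulr_gt0.
  have [m0 Hm0] : exists m0 : R, forall y,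
      (m0%:E <= phi y + (c * enorm (x0 - y) `^ p)%:E)%E.
    have lb y : (moreau_env phi p g x0 <= phi y + (c * enorm (x0 - y) `^ p)%:E)%E.
      by apply: ereal_inf_lbound; exists y.
    case E: (moreau_env phi p g x0) hx0 lb => [v| |] // _ lb.
      by exists v.
    by exists 0 => y; move: (lb y); rewrite leye_eq => /eqP ->; rewrite leey.
  set a := enorm x0.
  exists (c * 2 `^ p); split; first by rewrite mulr_gt0 // powR_gt0.
  exists (m0 - c * 2 `^ p * a `^ p) => y.
  have key : enorm (x0 - y) `^ p <= 2 `^ p * a `^ p + 2 `^ p * enorm y `^ p.
    have h2 := powR_ge0 2 p; have ha := powR_ge0 a p; have hy := powR_ge0 (enorm y) p.
    have mono u v : 0 <= u -> u <= v -> u `^ p <= v `^ p.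
      move=> u0 uv; apply: (ge0_ler_powR (ltW p0)) => //; rewrite nnegrE //.
      exact: le_trans uv.
    case: (enormB_le2 x0 y) => h.
      have := mono _ _ (enorm_ge0 _) h; rewrite powRM // ?enorm_ge0 //.
      move=> hh; apply: (le_trans hh); rewrite lerDl; exact: mulr_ge0.
    have := mono _ _ (enorm_ge0 _) h; rewrite powRM // ?enorm_ge0 //.
    move=> hh; apply: (le_trans hh); rewrite lerDr; exact: mulr_ge0.
  have := Hm0 y; have := fN y; case: (phi y) => [v| |] // _.
    rewrite -!EFinD !lee_fin => h.
    have := ler_wpM2l (ltW c0) key; nra.
  by move=> *; rewrite addye // leey.
- move=> [l [l0 [m Hm]]].
  exists (p * l)^-1; split; first by rewrite invr_gt0 mulr_gt0.
  exists 0; apply: (lt_le_trans (ltNyr m)).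
  apply: le_ereal_inf_tmp => _ [y _ <-].
  rewrite enormN.
  have -> : (p * (p * l)^-1)^-1 = l.
    by rewrite invfM invrK mulrA mulVf ?mul1r // gt_eqF.
  exact: Hm.
- move=> [l [l0 [m Hm]]].
  have h1 : ((- (`|m| + l))%:E <= ereal_inf [set (phi x * ((enorm x `^ p)^-1)%R%:E)%E
                  | x in [set x | (1 < enorm x)%R]])%E.
    apply: le_ereal_inf_tmp => _ [x hx <-].
    have E1 : 1 <= enorm x `^ p.
      have := ge0_ler_powR (ltW p0) (x:=1) (y:=enorm x); rewrite powR1; apply => //.
        by rewrite nnegrE.
      by rewrite nnegrE enorm_ge0.
      exact: ltW.
    have E0 : 0 < enorm x `^ p by apply: lt_le_trans E1.
    set E := enorm x `^ p in E1 E0 *.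
    set w := E^-1.
    have w0 : 0 < w by rewrite invr_gt0.
    have wE : w * E = 1 by rewrite mulVf // gt_eqF.
    have w1 : w <= 1 by rewrite invr_le1 // unitf_gt0.
    have := Hm x; have := fN x; case: (phi x) => [v| |] // _.
      rewrite -EFinD -EFinM !lee_fin => h.
      have hm1 := ler_norm m; have hm2 : - `|m| <= m by rewrite lerNl -normrN ler_norm.
      have := ler_wpM2r (ltW w0) h.
      have := ler_wpM2r (ltW w0) hm2.
      have : `|m| * w <= `|m| by rewrite ler_piMr.
      have : l * (w * E) = l by rewrite wE mulr1.
      rewrite -/E in h; nra.
    by rewrite gt0_mulye ?leey // lte_fin.
  apply: (lt_le_trans (ltNyr (- (`|m| + l)))); apply: (le_trans h1).
  by apply: ereal_sup_ubound; exists 1.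
- move=> h.
  have [_ [r _ <-] hs] := ereal_sup_gt h.
  have [b Hb] : exists b : R, forall x, r < enorm x ->
      (b%:E <= phi x * ((enorm x `^ p)^-1)%R%:E)%E.
    have lb x : r < enorm x -> (ereal_inf [set (phi x * ((enorm x `^ p)^-1)%R%:E)%E
                  | x in [set x | (r < enorm x)%R]] <= phi x * ((enorm x `^ p)^-1)%R%:E)%E.
      by move=> hx; apply: ereal_inf_lbound; exists x.
    case E: (ereal_inf _) hs lb => [v| |] // _ lb.
      by exists v => x hx; exact: lb.
    by exists 0 => x /lb; rewrite leye_eq => /eqP ->; rewrite leey.
  set rho := `|r| + 1.
  have [M HM] := phi_lb_ball _ rho lsc fN.
  exists (`|b| + 1); split; first by rewrite ltr_wpDl.
  exists (- `|M|) => x.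
  have hE := powR_ge0 (enorm x) p.
  case: (lerP (enorm x) rho) => hx.
    have := HM x hx; have := fN x; case: (phi x) => [v| |] // _.
      rewrite -EFinD !lee_fin => hh.
      have := ler_norm M; have : 0 <= (`|b| + 1) * enorm x `^ p.
        by rewrite mulr_ge0 // ltr_wpDl.
      have : - `|M| <= M by rewrite lerNl -normrN ler_norm.
      lra.
    by move=> *; rewrite addye // leey.
  have hr : r < enorm x.
    apply: le_lt_trans hx; rewrite /rho; have := ler_norm r; lra.
  have E0 : 0 < enorm x `^ p.
    apply: powR_gt0; apply: le_lt_trans hx; rewrite /rho; have := normr_ge0 r; lra.
  have := Hb x hr; have := fN x; case: (phi x) => [v| |] // _.
    rewrite -EFinM -EFinD !lee_fin => hb.
    set E := enorm x `^ p in E0 hb hE *.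
    have hv : b * E <= v.
      by rewrite -ler_pdivlMr.
    have hb2 : - `|b| <= b by rewrite lerNl -normrN ler_norm.
    have : 0 <= (b + `|b|) * E by rewrite mulr_ge0 //; lra.
    have := normr_ge0 M.
    nra.
  by move=> *; rewrite addye // leey.
Qed.
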